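(* Let $m\ge1$ and let $\Psi_m(X)=\det(x_{ij})_{1\le i,j\le m}$, viewed as a polynomial in the $m^2$ variables $x_{11},\ldots,x_{mm}$ (i.e. a polynomial on $\mathbb{R}^{m^2}$). Then $\Psi_m$ is an irreducible homogeneous polynomial of degree $m$ which is an eigenfunction of $L$, i.e. $L(\Psi_m)$ is divisible by $\Psi_m$ in $\mathbb{R}[x_{11},\ldots,x_{mm}]$.
   Context: For a polynomial $f$ on $\mathbb{R}^n$ in variables $x_1,\ldots,x_n$, $L(f):=|\nabla f|^2\Delta f-\sum_{i,j=1}^n f_{x_i}f_{x_j}f_{x_ix_j}$. A homogeneous polynomial $f$ is called an eigenfunction of $L$ if $L(f)\equiv 0 \bmod f$, i.e. $L(f)=\lambda f$ for some polynomial $\lambda$. *)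

(* Defs.v *)
From HB Require Import structures.
From mathcomp Require Import all_boot all_order all_algebra.
From mathcomp Require Import reals.
From mathcomp Require Import mpoly.
Set Implicit Arguments. Unset Strict Implicit. Unset Printing Implicit Defensive.
Import Order.TTheory GRing.Theory Num.Theory.
Local Open Scope ring_scope.

Definition Lop (R : ringType) (n : nat) (f : {mpoly R[n]}) : {mpoly R[n]} :=
  (\sum_(i < n) f^`M(i) * f^`M(i)) * (\sum_(i < n) (f^`M(i))^`M(i))
  - \sum_(i < n) \sum_(j < n) f^`M(i) * f^`M(j) * (f^`M(j))^`M(i).

Definition eigenfunctionL (R : ringType) (n : nat) (f : {mpoly R[n]}) : Prop :=
  (exists d : nat, f \is d.-homog) /\ exists lambda : {mpoly R[n]}, Lop f = lambda * f.

Definition irreducible_elt (R : idomainType) (p : R) : Prop :=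
  p != 0 /\ p \isn't a GRing.unit /\
  forall q r : R, p = q * r -> q \is a GRing.unit \/ r \is a GRing.unit.

Definition detpoly (R : comRingType) (m : nat) : {mpoly R[m * m]} :=
  \det (\matrix_(i < m, j < m) ('X_(mxvec_index i j) : {mpoly R[m * m]})).

(* Main.v *)
Require Import Defs.
From HB Require Import structures.
From mathcomp Require Import all_boot all_order all_algebra.
From mathcomp Require Import reals.
From mathcomp Require Import mpoly.
From mathcomp Require Import zify ring.
From mathcomp Require Import perm.
Set Implicit Arguments. Unset Strict Implicit. Unset Printing Implicit Defensive.
Import Order.TTheory GRing.Theory Num.Theory.
Local Open Scope ring_scope.
Definition wm (n : nat) (w : 'I_n -> nat) (mm : 'X_{1..n}) : nat :=
  (\sum_(i < n) w i * mm i)%N.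
Lemma wm0 n (w : 'I_n -> nat) : wm w 0%MM = 0%N.
Proof. by rewrite /wm big1 // => i _; rewrite mnm0E muln0. Qed.
Lemma wmD n (w : 'I_n -> nat) : {morph wm w : m1 m2 / (m1 + m2)%MM >-> (m1 + m2)%N}.
Proof. by move=> m1 m2; rewrite /wm -big_split; apply: eq_bigr => i _; rewrite mnmDE mulnDr. Qed.
HB.instance Definition _ n w := isMeasure.Build n (@wm n w) (@wm0 n w) (@wmD n w).

Section WDeg.
Variables (n : nat) (R : idomainType) (mf : measure n).
Implicit Types (p q : {mpoly R[n]}).
Local Notation mm p := (mmeasure mf p).

Lemma mm_attained p : p != 0 -> exists2 m0, m0 \in msupp p & (mf m0).+1 = mm p.
Proof.
move=> p0; have hpos: (0 < mm p)%N by rewrite lt0n mmeasure_poly_eq0.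
have: has (fun m0 => (mf m0).+1 == mm p) (msupp p).
  apply/negPn/negP => /hasPn H.
  have : (mm p <= (mm p).-1)%N.
    rewrite {1}mmeasureE; apply/bigmax_leqP_seq => m0 min _.
    have h2 := mmeasure_mnm_lt mf min; have /eqP h1 := H m0 min.
    lia.
  by rewrite -{1}(prednK hpos) ltnn.
by case/hasP => m0 h /eqP e; exists m0.
Qed.

Lemma pihomog_coef p x : (mf x < mm p)%N -> (pihomog mf (mf x) p)@_x = p@_x.
Proof.
move=> lt.
rewrite [in RHS](pihomog_partitionE (leqnn (mm p))).
rewrite (bigD1 (Ordinal lt)) //= mcoeffD [X in _ + X]raddf_sum /=.
rewrite big1 ?addr0 // => i ne.
apply: dhomog_nemf_coeff; first exact: pihomogP.
by apply: contra ne => /eqP e; apply/eqP/val_inj; rewrite /= e.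
Qed.

Lemma mmeasureM p q : p != 0 -> q != 0 -> mm (p * q) = (mm p + mm q).-1.
Proof.
move=> p0 q0.
have ep := mpolySpred mf p0; have eq := mpolySpred mf q0.
set a := (mm p).-1 in ep *; set b := (mm q).-1 in eq *.
rewrite ep eq addSn /=.
apply/eqP; rewrite eqn_leq; apply/andP; split.
  rewrite {1}mmeasureE; apply/bigmax_leqP_seq => x /msuppM_le /allpairsP.
  case=> [[m1 m2] [/= h1 h2 ->]] _; rewrite mfD.
  have := mmeasure_mnm_lt mf h1; have := mmeasure_mnm_lt mf h2.
  by rewrite ep eq !ltnS addnS ltnS => l2 l1; apply: leq_add.
have piM : pihomog mf (a + b) (p * q) = pihomog mf a p * pihomog mf b q.
  have Epq : p * q = \sum_(i < mm p) \sum_(j < mm q) pihomog mf i p * pihomog mf j q.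
    rewrite [in LHS](pihomog_partitionE (leqnn (mm p))) [in LHS](pihomog_partitionE (leqnn (mm q))).
    by rewrite big_distrl; apply: eq_bigr => i _; rewrite big_distrr.
  rewrite Epq (raddf_sum (pihomog mf (a + b))) /=.
  have ha : (a < mm p)%N by rewrite ep.
  have hb : (b < mm q)%N by rewrite eq.
  rewrite (bigD1 (Ordinal ha)) //= [X in _ + X]big1 ?addr0; last first.
    move=> i ne; rewrite (raddf_sum (pihomog mf (a + b))) /= big1 // => j _.
    apply: (pihomog_ne0 (d := (i + j)%N)); last by apply: dhomogM; apply: pihomogP.
    have li : (i <= a)%N by rewrite -ltnS -ep.
    have lj : (j <= b)%N by rewrite -ltnS -eq.
    have lti : (i < a)%N.
      rewrite ltn_neqAle li andbT; apply: contra ne => /eqP e.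
      by apply/eqP/val_inj; rewrite /= e.
    rewrite neq_ltn; apply/orP; left; lia.
  rewrite (raddf_sum (pihomog mf (a + b))) /= (bigD1 (Ordinal hb)) //= big1 ?addr0; last first.
    move=> j ne.
    apply: (pihomog_ne0 (d := (a + j)%N)); last by apply: dhomogM; apply: pihomogP.
    have lj : (j <= b)%N by rewrite -ltnS -eq.
    have ltj : (j < b)%N.
      rewrite ltn_neqAle lj andbT; apply: contra ne => /eqP e.
      by apply/eqP/val_inj; rewrite /= e.
    by rewrite neq_ltn ltn_add2l ltj.
  by apply: pihomog_dE; apply: dhomogM; apply: pihomogP.
have [ma ma_in ema] := mm_attained p0.
have [mb mb_in emb] := mm_attained q0.
have nza : pihomog mf a p != 0.
  apply/eqP => /(congr1 (mcoeff ma)).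
  have : mf ma = a by rewrite /a -ema.
  move=> e; rewrite -{1}e pihomog_coef; last by rewrite -ema.
  by rewrite mcoeff0 => h; move: ma_in; rewrite mcoeff_msupp h eqxx.
have nzb : pihomog mf b q != 0.
  apply/eqP => /(congr1 (mcoeff mb)).
  have : mf mb = b by rewrite /b -emb.
  move=> e; rewrite -{1}e pihomog_coef; last by rewrite -emb.
  by rewrite mcoeff0 => h; move: mb_in; rewrite mcoeff_msupp h eqxx.
rewrite addnS leqNgt; apply/negP => le.
have : pihomog mf (a + b) (p * q) == 0.
  rewrite pihomogE big_seq_cond big_pred0 // => x; apply/negbTE/negP => /andP[xin /eqP ex].
  by have := mmeasure_mnm_lt mf xin; rewrite ex => /leq_trans/(_ le); rewrite ltnn.
by rewrite piM mulf_eq0 (negbTE nza) (negbTE nzb).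
Qed.
End WDeg.

Definition rowset (T : Type) (m : nat) (A : 'M[T]_m) (i : 'I_m) (s : 'I_m -> T) : 'M[T]_m :=
  \matrix_(k, l) if k == i then s l else A k l.

Section RowSet.
Variable R : comRingType.
Variable m : nat.
Implicit Types (A : 'M[R]_m).

Definition E (j : 'I_m) : 'I_m -> R := fun l => (l == j)%:R.

Lemma cofactor_rowset A i s j : cofactor (rowset A i s) i j = cofactor A i j.
Proof.
rewrite /cofactor; congr (_ * _); congr (\det _).
by apply/matrixP => k l; rewrite !mxE eq_sym (negbTE (neq_lift _ _)).
Qed.

Lemma det_rowset A i s : \det (rowset A i s) = \sum_j s j * cofactor A i j.
Proof.
rewrite (expand_det_row _ i); apply: eq_bigr => j _.
by rewrite cofactor_rowset mxE eqxx.
Qed.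

Lemma det_rowsetE A i j : \det (rowset A i (E j)) = cofactor A i j.
Proof.
rewrite det_rowset (bigD1 j) //= big1 ?addr0 /E ?eqxx ?mul1r // => l ne.
by rewrite (negbTE ne) mul0r.
Qed.

Lemma det_rowset_lin A i s : \sum_j s j * \det (rowset A i (E j)) = \det (rowset A i s).
Proof. by rewrite det_rowset; apply: eq_bigr => j _; rewrite det_rowsetE. Qed.

Lemma rowsetC A a c s t : a != c ->
  rowset (rowset A a s) c t = rowset (rowset A c t) a s.
Proof.
move=> ne; apply/matrixP => k l; rewrite !mxE.
case: (eqVneq k c) => [->|kc]; case: (eqVneq k a) => [ka|ka] //.
all: by rewrite eq_sym (negbTE ne).
Qed.

Lemma rowset_id A i : rowset A i (fun l => A i l) = A.
Proof. by apply/matrixP => k l; rewrite !mxE; case: eqP => // ->. Qed.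

Lemma det_rowset0 A i : \det (rowset A i (fun _ => 0)) = 0.
Proof. by rewrite det_rowset big1 // => j _; rewrite mul0r. Qed.

Lemma det_rowsetZ A i x s : \det (rowset A i (fun l => x * s l)) = x * \det (rowset A i s).
Proof. by rewrite !det_rowset mulr_sumr; apply: eq_bigr => j _; rewrite mulrA. Qed.

End RowSet.
Arguments E {R m}.

Section MDerivDet.
Variables (R : comRingType) (n : nat) (k : 'I_n).
Local Notation D p := (mderiv k p).

Lemma widen_eq m (i j : 'I_m) : (widen_ord (leqnSn m) j == widen_ord (leqnSn m) i) = (j == i).
Proof. by apply/eqP/eqP => [/(congr1 val) /= /val_inj|->]. Qed.

Lemma max_widen_eq m (i : 'I_m) : (widen_ord (leqnSn m) i == ord_max) = false.
Proof. by apply/negbTE; rewrite -val_eqE /= neq_ltn ltn_ord. Qed.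

Lemma mderiv_prod m (F : 'I_m -> {mpoly R[n]}) :
  D (\prod_i F i) = \sum_i \prod_j (if j == i then D (F j) else F j).
Proof.
elim: m F => [|m IH] F.
  by rewrite !big_ord0 -mpolyC1 mderivC.
rewrite big_ord_recr /= mderivM IH [in RHS]big_ord_recr /=; congr (_ + _).
  rewrite big_distrl; apply: eq_bigr => i _ /=.
  rewrite big_ord_recr /= eq_sym max_widen_eq; congr (_ * _).
rewrite big_ord_recr /= eqxx; congr (_ * _).
by apply: eq_bigr => j _; rewrite max_widen_eq.
Qed.

Lemma mderiv_sign (b : bool) (p : {mpoly R[n]}) : D ((-1) ^+ b * p) = (-1) ^+ b * D p.
Proof. by case: b; rewrite ?expr1 ?expr0 ?mulN1r ?mul1r ?mderivN. Qed.

Lemma mderiv_det m (A : 'M[{mpoly R[n]}]_m) :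
  D (\det A) = \sum_i \det (rowset A i (fun l => D (A i l))).
Proof.
rewrite /determinant raddf_sum /=.
under eq_bigr => s _ do rewrite mderiv_sign mderiv_prod mulr_sumr.
rewrite exchange_big /=; apply: eq_bigr => i _; apply: eq_bigr => s _.
congr (_ * _); apply: eq_bigr => j _; rewrite !mxE.
by case: eqP => // ->.
Qed.
End MDerivDet.
Section Key.
Variables (R : idomainType) (m : nat).
Implicit Types (A : 'M[R]_m).

Definition Cof A a : 'I_m -> R := fun b => \det (rowset A a (E b)).

Lemma cof_row A a j : \sum_l A j l * Cof A a l = (j == a)%:R * \det A.
Proof.
rewrite det_rowset_lin; case: (eqVneq j a) => [->|ne].
  by rewrite rowset_id mul1r.
rewrite mul0r; apply: (determinant_alternate ne) => l.
by rewrite !mxE eqxx (negbTE ne).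
Qed.

Lemma key A (a c : 'I_m) : a != c -> \det A != 0 ->
  \det (rowset (rowset A a (Cof A a)) c (Cof A c)) =
  \det A * \det (rowset (rowset (A *m A^T) a (E a)) c (E c)).
Proof.
move=> ac dA0.
set N := rowset _ c _.
have eNA : N *m A^T = rowset (rowset (A *m A^T) a (fun l => \det A * E a l)) c
                             (fun l => \det A * E c l).
  apply/matrixP => i j; rewrite !mxE.
  under eq_bigr => l _ do rewrite !mxE.

  have [eic|ic] := eqVneq i c.
    rewrite (eq_bigr (fun l => A j l * Cof A c l)) => [|l _]; last exact: mulrC.
    by rewrite cof_row /E mulrC.
  have [eia|ia] := eqVneq i a.
    rewrite (eq_bigr (fun l => A j l * Cof A a l)) => [|l _]; last exact: mulrC.
    by rewrite cof_row /E mulrC.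
  by apply: eq_bigr => l _; rewrite mxE.
have := det_mulmx N A^T; rewrite eNA det_tr det_rowsetZ rowsetC // det_rowsetZ rowsetC 1?eq_sym //.
rewrite [X in X = _]mulrC => /(mulIf dA0) ->.
by [].
Qed.
End Key.
Section VarMat.
Variables (R : comRingType) (m : nat).
Local Notation n := (m * m)%N.
Local Notation P := {mpoly R[n]}.

Definition xv (i j : 'I_m) : P := 'X_(mxvec_index i j).
Definition XM : 'M[P]_m := \matrix_(i, j) xv i j.

Lemma detpolyE : detpoly R m = \det XM.
Proof. by []. Qed.

Lemma mxvec_index_eq (i j a b : 'I_m) :
  (mxvec_index i j == mxvec_index a b) = (i == a) && (j == b).
Proof.
case: (curry_mxvec_bij m m) => g fK _.
apply/eqP/andP => [e|[/eqP -> /eqP ->]] //.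
have := fK (i, j) isT; have := fK (a, b) isT; rewrite /= e => -> [-> ->].
by split.
Qed.

Lemma mderivXU (l k : 'I_n) : ('X_l : P)^`M(k) = (l == k)%:R.
Proof.
rewrite mderivX mnm1E; case: eqP => [->|_]; last by rewrite scale0r.
have -> : (U_(k) - U_(k))%MM = 0%MM by apply/mnmP => x; rewrite mnmBE subnn mnm0E.
by rewrite mpolyX0 scale1r.
Qed.

Lemma mderiv_nat (b : nat) k : ((b%:R : P))^`M(k) = 0.
Proof. by rewrite -mpolyC_nat mderivC. Qed.

Lemma sum_idx (F : 'I_n -> P) : \sum_k F k = \sum_a \sum_b F (mxvec_index a b).
Proof.
rewrite (reindex (uncurry (@mxvec_index m m))) /=; last first.
  case: (curry_mxvec_bij m m) => g fK gK; exists g => x _.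
    by apply: fK.
  by apply: gK.
rewrite pair_big /=; apply: eq_bigr => -[x y] _ //.
Qed.

Definition C (a b : 'I_m) : P := \det (rowset XM a (E b)).

Lemma deriv1 a b : (\det XM)^`M(mxvec_index a b) = C a b.
Proof.
rewrite mderiv_det (bigD1 a) //= big1 ?addr0.
  congr (\det _); apply/matrixP => i j; rewrite !mxE.
  by case: eqP => // _; rewrite mderivXU mxvec_index_eq eqxx /E.
move=> i ia; rewrite -(det_rowset0 XM i); congr (\det _).
apply/matrixP => k l; rewrite !mxE; case: eqP => // _.
by rewrite mderivXU mxvec_index_eq (negbTE ia).
Qed.

Lemma deriv2 a b c d : (C a b)^`M(mxvec_index c d) =
  if c == a then 0 else \det (rowset (rowset XM a (E b)) c (E d)).
Proof.
rewrite /C mderiv_det.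
have h0 : forall i, i != c -> \det (rowset (rowset XM a (E b)) i
    (fun l => ((rowset XM a (E b)) i l)^`M(mxvec_index c d))) = 0.
  move=> i ic; rewrite -(det_rowset0 (rowset XM a (E b)) i); congr (\det _).
  apply/matrixP => k l; rewrite !mxE; case: eqP => // _.
  case: eqP => _; first by rewrite /E mderiv_nat.
  by rewrite mderivXU mxvec_index_eq (negbTE ic).
rewrite (bigD1 c) //= big1 ?addr0; last by move=> i; apply: h0.
case: eqP => [ca|ca].
  rewrite -(det_rowset0 (rowset XM a (E b)) c); congr (\det _).
  apply/matrixP => k l; rewrite !mxE; case: eqP => // _.
  by rewrite ca eqxx /E mderiv_nat.
congr (\det _); apply/matrixP => k l; rewrite !mxE; case: eqP => // _.
have /negbTE -> : c != a by apply/eqP.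
by rewrite /xv mderivXU mxvec_index_eq !eqxx /E.
Qed.

End VarMat.
Arguments C {R m}.
Section LopDet.
Variables (R : fieldType) (m : nat).
Local Notation n := (m * m)%N.
Local Notation P := {mpoly R[n]}.

Lemma Lop_det : \det (XM R m) != 0 ->
  exists lambda : P, Lop (\det (XM R m)) = lambda * \det (XM R m).
Proof.
move=> f0; set f := \det (XM R m).
set K := fun a c : 'I_m => \det (rowset (rowset (XM R m *m (XM R m)^T) a (E a)) c (E c)).
exists (- \sum_a \sum_c (if a == c then 0 else K a c)).
rewrite /Lop.
have -> : \sum_(i < n) (f^`M(i))^`M(i) = 0.
  rewrite sum_idx big1 // => a _; rewrite big1 // => b _.
  by rewrite deriv1 deriv2 eqxx.
rewrite mulr0 sub0r mulNr; congr (- _).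
rewrite sum_idx mulr_suml; apply: eq_bigr => a _.
rewrite (eq_bigr (fun b => \sum_c \sum_d C a b * C c d *
   (if a == c then 0 else \det (rowset (rowset (XM R m) c (E d)) a (E b))))); last first.
  move=> b _; rewrite sum_idx; apply: eq_bigr => c _; apply: eq_bigr => d _.
  by rewrite !deriv1 deriv2.
rewrite exchange_big /= mulr_suml; apply: eq_bigr => c _.
case: (eqVneq a c) => [<-|ac].
  rewrite mul0r big1 // => b _; rewrite big1 // => d _.
  by rewrite mulr0.
rewrite exchange_big /=.
under eq_bigr => d _ do under eq_bigr => b _ do rewrite mulrAC.
under eq_bigr => d _ do rewrite -mulr_suml.
under eq_bigr => d _ do rewrite (det_rowset_lin _ a (fun b => C a b)) rowsetC 1?eq_sym //.
rewrite (eq_bigr (fun d => C c d * \det (rowset (rowset (XM R m) a (Cof (XM R m) a)) c (E d)))); last first.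
  by move=> d _; rewrite mulrC.
rewrite det_rowset_lin key // /K mulrC.
by [].
Qed.
End LopDet.
Section Mono.
Variables (R : comRingType) (m : nat).
Local Notation n := (m * m)%N.
Local Notation P := {mpoly R[n]}.

Definition mon (s : 'S_m) : 'X_{1..n} := (\sum_i U_(mxvec_index i (s i)))%MM.

Lemma sign_mul (b : bool) (p : P) : (-1) ^+ b * p = ((-1) ^+ b : R) *: p.
Proof. by case: b; rewrite ?expr1 ?expr0 ?mulN1r ?mul1r ?scaleN1r ?scale1r. Qed.

Lemma detXM_mon : \det (XM R m) = \sum_(s : 'S_m) ((-1) ^+ s : R) *: 'X_[mon s].
Proof.
apply: eq_bigr => s _; rewrite sign_mul; congr (_ *: _).
rewrite /mon -mprodXE; apply: eq_bigr => i _; by rewrite mxE.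
Qed.

Lemma mon_coef s a b : mon s (mxvec_index a b) = (s a == b).
Proof.
rewrite /mon mnm_sumE (bigD1 a) //= big1 ?addn0.
  by rewrite mnm1E mxvec_index_eq eqxx.
by move=> i ia; rewrite mnm1E mxvec_index_eq (negbTE ia).
Qed.

Lemma mon_inj : injective mon.
Proof.
move=> s t e; apply/permP => a.
have := mon_coef t a (s a); rewrite -e mon_coef eqxx.
by case: eqP.
Qed.

Lemma mdeg_mon s : mdeg (mon s) = m.
Proof. by rewrite /mon mdeg_sum (eq_bigr (fun _ => 1%N)) ?sum1_card ?card_ord // => i _; rewrite mdeg1. Qed.

Lemma detXM_coef x : (\det (XM R m))@_x = \sum_(s : 'S_m) ((-1) ^+ s : R) * (mon s == x)%:R.
Proof.
rewrite detXM_mon raddf_sum; apply: eq_bigr => s _.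
by rewrite /= mcoeffZ mcoeffX.
Qed.

Lemma detXM_coef_mon s : (\det (XM R m))@_(mon s) = (-1) ^+ s.
Proof.
rewrite detXM_coef (bigD1 s) //= eqxx mulr1 big1 ?addr0 // => t ts.
by rewrite (inj_eq mon_inj) (negbTE ts) mulr0.
Qed.

Lemma detXM_supp x : x \in msupp (\det (XM R m)) -> exists s, x = mon s.
Proof.
rewrite mcoeff_msupp detXM_coef => h.
case: (boolP [exists s : 'S_m, mon s == x]) => [/existsP [s /eqP <-]|/existsPn H].
  by exists s.
move: h; rewrite big1 ?eqxx // => s _; by rewrite (negbTE (H s)) mulr0.
Qed.

Lemma mon_supp s : mon s \in msupp (\det (XM R m)).
Proof. by rewrite mcoeff_msupp detXM_coef_mon signr_eq0. Qed.

Lemma detXM_neq0 : \det (XM R m) != 0.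
Proof.
apply/eqP => e; have := mon_supp 1%g; rewrite e.
by rewrite mcoeff_msupp mcoeff0 eqxx.
Qed.

Lemma detXM_homog : \det (XM R m) \is m.-homog.
Proof.
rewrite detXM_mon; apply: rpred_sum => s _; apply: rpredZ.
have := dhomogX R mdeg m (mon s).
by move=> ->; apply/eqP; exact: mdeg_mon.
Qed.

End Mono.
Section Irred.
Variables (R : fieldType) (m : nat).
Local Notation n := (m * m)%N.
Local Notation P := {mpoly R[n]}.
Local Notation f := (\det (XM R m)).

Definition dk (k : 'I_n) : 'I_n -> nat := fun i => (i == k : nat).
Definition dk2 (k k' : 'I_n) : 'I_n -> nat := fun i => ((i == k) + (i == k'))%N.

Lemma wm_dk k x : wm (dk k) x = x k.
Proof.
rewrite (_ : wm (dk k) x = \sum_i dk k i * x i)%N // (bigD1 k) //= /dk eqxx mul1n big1 ?addn0 // => i ik.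
by rewrite /dk (negbTE ik) mul0n.
Qed.

Lemma wm_dk2 k k' x : wm (dk2 k k') x = (x k + x k')%N.
Proof.
rewrite -!wm_dk (_ : wm (dk2 k k') x = \sum_i dk2 k k' i * x i)%N //.
rewrite (_ : wm (dk k) x = \sum_i dk k i * x i)%N // (_ : wm (dk k') x = \sum_i dk k' i * x i)%N //.
rewrite -big_split; apply: eq_bigr => i _.
by rewrite /dk2 /dk mulnDl.
Qed.

Lemma mmw_mono (w1 w2 : 'I_n -> nat) (p : P) : (forall i, w1 i <= w2 i)%N ->
  (mmeasure (wm w1) p <= mmeasure (wm w2) p)%N.
Proof.
move=> le; rewrite [X in (X <= _)%N]mmeasureE; apply/bigmax_leqP_seq => x xin _.
apply: leq_trans (mmeasure_mnm_lt (wm w2) xin); rewrite ltnS.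
change (\sum_i w1 i * x i <= \sum_i w2 i * x i)%N.
by apply: leq_sum => i _; apply: leq_mul.
Qed.

Lemma mmw_le (w : 'I_n -> nat) d : (forall s, wm w (mon s) <= d)%N ->
  (mmeasure (wm w) f <= d.+1)%N.
Proof.
move=> H; rewrite mmeasureE; apply/bigmax_leqP_seq => x /detXM_supp [s ->] _.
by rewrite ltnS H.
Qed.

Lemma mmw_ge (w : 'I_n -> nat) s : (wm w (mon s) < mmeasure (wm w) f)%N.
Proof. have := mmeasure_mnm_lt (wm w) (@mon_supp R m s). by []. Qed.

Lemma mmw_var a b : mmeasure (wm (dk (mxvec_index a b))) f = 2.
Proof.
apply/eqP; rewrite eqn_leq; apply/andP; split.
  by apply: mmw_le => s; rewrite wm_dk mon_coef; case: eqP.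
have := mmw_ge (dk (mxvec_index a b)) (tperm a b).
by rewrite wm_dk mon_coef tpermL eqxx.
Qed.

Lemma mmw_row a b b' : b != b' ->
  (mmeasure (wm (dk2 (mxvec_index a b) (mxvec_index a b'))) f <= 2)%N.
Proof.
move=> bb; apply: mmw_le => s; rewrite wm_dk2 !mon_coef.
by case: eqP => [->|]; rewrite ?(negbTE bb) //; case: eqP.
Qed.

Lemma mmw_col a a' b : a != a' ->
  (mmeasure (wm (dk2 (mxvec_index a b) (mxvec_index a' b))) f <= 2)%N.
Proof.
move=> aa; apply: mmw_le => s; rewrite wm_dk2 !mon_coef.
case: eqP => [e1|]; case: eqP => [e2|] //.
by move: aa; rewrite -(inj_eq (@perm_inj _ s)) e1 e2 eqxx.
Qed.

Lemma mmeasure_ge1 (w : 'I_n -> nat) (p : P) : p != 0 -> (1 <= mmeasure (wm w) p)%N.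
Proof. by move=> p0; rewrite lt0n mmeasure_poly_eq0. Qed.

Lemma const_unit (p : P) : p != 0 -> (forall k, mmeasure (wm (dk k)) p <= 1)%N ->
  p \is a GRing.unit.
Proof.
move=> p0 H.
have supp0 : forall x, x \in msupp p -> x = 0%MM.
  move=> x xin; apply/mnmP => k; rewrite mnm0E.
  have lt : (x k < mmeasure (wm (dk k)) p)%N.
    by rewrite -wm_dk; exact: (mmeasure_mnm_lt (wm (dk k)) xin).
  by have := leq_trans lt (H k); rewrite ltnS leqn0 => /eqP.
have hs : (msize p <= 1)%N.
  rewrite msizeE; apply/bigmax_leqP_seq => x xin _.
  by rewrite (supp0 x xin) mdeg0.
have e := msize1_polyC hs.
have c0 : p@_0 != 0 by apply: contra p0 => /eqP c; rewrite e c.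
move: e c0; set c := p@_0 => e c0; rewrite e.
apply/unitrP; exists (c^-1)%:MP.
by split; rewrite -mpolyCM ?mulVf ?mulfV // mpolyC1.
Qed.

Lemma detXM_not_unit : (0 < m)%N -> f \isn't a GRing.unit.
Proof.
move=> hm; apply/negP => /unitrP [y [yf _]].
have y0 : y != 0.
  by apply/eqP => y0; move: yf; rewrite y0 mul0r => /eqP; rewrite eq_sym oner_eq0.
have := congr1 (fun p : P => msize p) yf; rewrite /=; rewrite msizeM ?detXM_neq0 // msize1.
have := msize_mdeg_lt (@mon_supp R m 1%g); rewrite mdeg_mon.
have : (1 <= msize y)%N by rewrite lt0n msize_poly_eq0.
move=> h1 h2; rewrite -(prednK h1) addSn /= => h3.
have h4 : (mmeasure mdeg (\det (XM R m)) <= 1)%N by rewrite -h3 leq_addl.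
by have := leq_trans h2 h4; rewrite ltnS leqn0 => /eqP m0; rewrite m0 in hm.
Qed.

Lemma arith3 (qk rk qk' rk' q2 r2 F2 : nat) : (qk + rk = 3 -> qk' + rk' = 3 ->
  q2 + r2 = F2.+1 -> F2 <= 2 -> qk <= q2 -> qk' <= q2 -> rk <= r2 -> rk' <= r2 ->
  (2 <= qk) = (2 <= qk'))%N.
Proof. move=> *; apply/idP/idP => h; lia. Qed.

Lemma detXM_irr : (0 < m)%N -> irreducible_elt f.
Proof.
move=> hm; split; first exact: detXM_neq0.
split; first exact: detXM_not_unit.
move=> q r e.
have f0 := @detXM_neq0 R m.
have q0 : q != 0 by apply: contra f0 => /eqP q0; rewrite e q0 mul0r.
have r0 : r != 0 by apply: contra f0 => /eqP r0; rewrite e r0 mulr0.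
have mM w : (mmeasure (wm w) q + mmeasure (wm w) r)%N = (mmeasure (wm w) f).+1.
  rewrite e mmeasureM // prednK //.
  by rewrite (leq_trans (mmeasure_ge1 w q0)) // leq_addr.
pose inq k := (2 <= mmeasure (wm (dk k)) q)%N.
have H3 a b : (mmeasure (wm (dk (mxvec_index a b))) q + mmeasure (wm (dk (mxvec_index a b))) r = 3)%N.
  by rewrite mM mmw_var.
have Hpair a b a' b' : (mmeasure (wm (dk2 (mxvec_index a b) (mxvec_index a' b'))) f <= 2)%N ->
    inq (mxvec_index a b) = inq (mxvec_index a' b').
  move=> le; apply: (arith3 (H3 a b) (H3 a' b') (mM _) le).
  - by apply: mmw_mono => i; rewrite /dk /dk2 leq_addr.
  - by apply: mmw_mono => i; rewrite /dk /dk2 leq_addl.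
  - by apply: mmw_mono => i; rewrite /dk /dk2 leq_addr.
  - by apply: mmw_mono => i; rewrite /dk /dk2 leq_addl.
pose a0 : 'I_m := Ordinal hm.
have Hall a b : inq (mxvec_index a b) = inq (mxvec_index a0 a0).
  have -> : inq (mxvec_index a b) = inq (mxvec_index a a0).
    by case: (eqVneq b a0) => [->//|ba]; apply: Hpair; apply: mmw_row.
  by case: (eqVneq a a0) => [->//|aa]; apply: Hpair; apply: mmw_col.
case h: (inq (mxvec_index a0 a0)); [right|left]; apply: const_unit => // k;
  case: (mxvec_indexP k) => a b; have := H3 a b; have := Hall a b; rewrite h /inq.
  move=> h1 h2.
  move: h1 h2; set x := mmeasure _ q; set y := mmeasure _ r => h1 h2.
  lia.
move=> /negbT h1 h2; move: h1 h2; set x := mmeasure _ q; set y := mmeasure _ r => h1 h2; lia.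
Qed.
End Irred.

Theorem theorem3 (R : realType) (m : nat) (hm : (1 <= m)%N) :
  irreducible_elt (detpoly R m) /\
  detpoly R m \is m.-homog /\ detpoly R m != 0 /\
  eigenfunctionL (detpoly R m) /\
  exists lambda : {mpoly R[m * m]}, Lop (detpoly R m) = lambda * detpoly R m.
Proof.
have L := @Lop_det R m (@detXM_neq0 R m).
split; first exact: (@detXM_irr R m hm).
split; first exact: (@detXM_homog R m).
split; first exact: (@detXM_neq0 R m).
by split; [split; [exists m; exact: (@detXM_homog R m) | exact: L] | exact: L].
Qed.
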